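(* For every combinatorial auction with nonempty winner set $W$ and every bidder $i\in N$, the BLO outcome $\pi^{BLO}$ satisfies $\pi^{BLO}_i\ge \frac{1}{|W|}\pi^*_i$, where $\pi^*_i=\max\{\pi_i:\pi\in U\}$. The bound is tight: for every integer $k\ge1$ there is a combinatorial auction with $|W|=k$ and a bidder $i$ with $\pi^*_i>0$ and $\pi^{BLO}_i=\frac{1}{k}\pi^*_i$.
   Context: A combinatorial auction (CA) has a finite set of bidders $N=\{1,\dots,n\}$, a finite set of items $M$, and for each bidder $i$ a valuation $v_i:2^M\to\mathbb{R}_{\ge 0}$ with $v_i(\emptyset)=0$ (bids are assumed equal to true valuations). For $S\subseteq N$ let $w(S)=\max\{\sum_{i\in S}v_i(a_i): a_i\subseteq M,\ a_i\cap a_j=\emptyset\ (i\ne j)\}$ (with $w(\emptyset)=0$). Fix an allocation $(a^*_i)_{i\in N}$ attaining $w(N)$; the winner set is $W=\{i: a^*_i\neq\emptyset\}$. The core is $U=\{\pi\in\mathbb{R}^N:\ \pi_i\ge 0\ \forall i\in N,\ \sum_{i\in N\setminus S}\pi_i\le w(N)-w(S)\ \forall S\subseteq N\}$. For $x,y\in\mathbb{R}^n$, $x$ leximin-dominates $y$ if, writing $x_{(1)}\le\dots\le x_{(n)}$ and $y_{(1)}\le\dots\le y_{(n)}$ for the sorted entries, there is $0\le k\le n-1$ with $x_{(j)}=y_{(j)}$ for $j\le k$ and $x_{(k+1)}>y_{(k+1)}$. The BLO outcome $\pi^{BLO}$ is the (unique) $\pi\in U$ that is not leximin-dominated by any $\pi'\in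 U$. *)

(* Defs.v *)
From HB Require Import structures.
From mathcomp Require Import all_boot all_order all_algebra.
Set Implicit Arguments. Unset Strict Implicit. Unset Printing Implicit Defensive.
Import Order.TTheory GRing.Theory Num.Theory.
Local Open Scope ring_scope.

Definition valuation_ok (R : realFieldType) (n : nat) (M : finType)
    (v : 'I_n -> {set M} -> R) : Prop :=
  (forall i, v i set0 = 0) /\ (forall i A, 0 <= v i A).

Definition feasible (n : nat) (M : finType) (a : {ffun 'I_n -> {set M}}) : bool :=
  [forall i, forall j, (i != j) ==> [disjoint a i & a j]].

(* w(S) = max over feasible allocations of sum_{i in S} v_i(a_i);
   starting the max at 0 is harmless since valuations are nonnegative and the
   empty allocation is feasible (so w(set0) = 0). *)
Definition wS (R : realFieldType) (n : nat) (M : finType)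
    (v : 'I_n -> {set M} -> R) (S : {set 'I_n}) : R :=
  \big[Num.max/0]_(a : {ffun 'I_n -> {set M}} | feasible a)
     \sum_(i in S) v i (a i).

Definition optimal_alloc (R : realFieldType) (n : nat) (M : finType)
    (v : 'I_n -> {set M} -> R) (a : {ffun 'I_n -> {set M}}) : Prop :=
  feasible a /\ \sum_(i < n) v i (a i) = wS v [set: 'I_n].

Definition winners (n : nat) (M : finType) (a : {ffun 'I_n -> {set M}})
  : {set 'I_n} := [set i | a i != set0].

Definition in_core (R : realFieldType) (n : nat) (M : finType)
    (v : 'I_n -> {set M} -> R) (p : 'I_n -> R) : Prop :=
  (forall i, 0 <= p i) /\
  (forall S : {set 'I_n},
      \sum_(i in ~: S) p i <= wS v [set: 'I_n] - wS v S).

Definition sorted_vec (R : realFieldType) (n : nat) (x : 'I_n -> R) : seq R :=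
  sort <=%R [seq x i | i <- enum 'I_n].

Definition leximin_dom (R : realFieldType) (n : nat) (x y : 'I_n -> R) : Prop :=
  exists k : nat, (k < n)%N /\
    (forall j : nat, (j < k)%N -> nth 0 (sorted_vec x) j = nth 0 (sorted_vec y) j) /\
    nth 0 (sorted_vec y) k < nth 0 (sorted_vec x) k.

Definition is_BLO (R : realFieldType) (n : nat) (M : finType)
    (v : 'I_n -> {set M} -> R) (p : 'I_n -> R) : Prop :=
  in_core v p /\ ~ (exists q, in_core v q /\ leximin_dom q p).

Definition is_core_max (R : realFieldType) (n : nat) (M : finType)
    (v : 'I_n -> {set M} -> R) (i : 'I_n) (m : R) : Prop :=
  (exists p, in_core v p /\ p i = m) /\ (forall p, in_core v p -> p i <= m).

(* Main.v *)
Require Import Defs.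
From HB Require Import structures.
From mathcomp Require Import all_boot all_order all_algebra.
From mathcomp Require Import reals.
From mathcomp Require Import zify lra.
Import Order.TTheory GRing.Theory Num.Theory.
Local Open Scope ring_scope.


Lemma perm3 (T : eqType) (s : seq T) (P1 P2 P3 : pred T) :
  (forall j, (P1 j + P2 j + P3 j = 1)%N) ->
  perm_eq s (filter P1 s ++ filter P2 s ++ filter P3 s).
Proof.
move=> H; apply/permP => a; rewrite !count_cat !count_filter.
elim: s => //= j s IH; rewrite IH; have := H j.
by case: (P1 j) (P2 j) (P3 j) (a j) => [] [] [] [] /=; lia.
Qed.

Section Sorting.
Variable R : realFieldType.

Lemma sorted_catR (s1 s2 : seq R) : sorted <=%R s1 -> sorted <=%R s2 ->
  (forall a b, a \in s1 -> b \in s2 -> a <= b) -> sorted <=%R (s1 ++ s2).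
Proof.
elim: s1 => //= a s1 IH.
rewrite (path_sortedE le_trans) => /andP[Ha Hs1] Hs2 Hx.
rewrite (path_sortedE le_trans) all_cat Ha /=; apply/andP; split.
- by apply/allP => b Hb; apply: Hx; rewrite ?inE ?eqxx.
- apply: IH => // a' b Ha' Hb; apply: Hx => //; by rewrite inE Ha' orbT.
Qed.

Variable n : nat.

Lemma PS (s : seq R) : perm_eq s (sort <=%R s).
Proof. by rewrite perm_sym perm_sort. Qed.

Lemma sorted_split (x : 'I_n -> R) i c : x i = c ->
  sorted_vec x = sort <=%R [seq x j | j <- enum 'I_n & (j != i) && (x j <= c)]
     ++ c :: sort <=%R [seq x j | j <- enum 'I_n & c < x j].
Proof.
move=> xi; rewrite /sorted_vec; apply: le_sorted_eq.
- by apply: sort_sorted => ? ?; apply: le_total.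
- apply: sorted_catR; first by apply: sort_sorted => ? ?; apply: le_total.
  + rewrite /= (path_sortedE le_trans) sort_sorted ?andbT; last by move=> ? ?; apply: le_total.
    apply/allP => b; rewrite mem_sort => /mapP[j]; rewrite mem_filter => /andP[H _] ->.
    exact: ltW.
  + move=> a b; rewrite mem_sort => /mapP[j]; rewrite mem_filter => /andP[/andP[_ H] _] ->.
    rewrite inE => /orP[/eqP -> //|]; rewrite mem_sort => /mapP[j']; rewrite mem_filter.
    move=> /andP[H' _] ->; exact: (le_trans H (ltW H')).
- rewrite perm_sort.
  apply: (@perm_trans _ ([seq x j | j <- enum 'I_n & (j != i) && (x j <= c)] ++ c :: [seq x j | j <- enum 'I_n & c < x j])); last first.
    by apply: perm_cat; rewrite ?perm_cons; apply: PS.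
  have -> : c :: [seq x j | j <- enum 'I_n & c < x j] =
     [seq x j | j <- enum 'I_n & j == i] ++ [seq x j | j <- enum 'I_n & c < x j].
    by rewrite (filter_pred1_uniq (enum_uniq _) (mem_enum _ i)) /= xi.
  rewrite -!map_cat perm_map //; apply: perm3 => j.
  case: eqP => [->|/eqP ne] /=; first by rewrite xi ltxx.
  by rewrite ltNge; case: (x j <= c).
Qed.

Lemma sorted_split2 (y : 'I_n -> R) c :
  sorted_vec y = sort <=%R [seq y j | j <- enum 'I_n & y j <= c]
     ++ sort <=%R [seq y j | j <- enum 'I_n & c < y j].
Proof.
rewrite /sorted_vec; apply: le_sorted_eq.
- by apply: sort_sorted => ? ?; apply: le_total.
- apply: sorted_catR; try by apply: sort_sorted => ? ?; apply: le_total.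
  move=> a b; rewrite !mem_sort => /mapP[j]; rewrite mem_filter => /andP[H _] ->.
  move=> /mapP[j']; rewrite mem_filter => /andP[H' _] ->; exact: (le_trans H (ltW H')).
- rewrite perm_sort; apply: perm_trans; last exact: (perm_cat (PS _) (PS _)).
  rewrite -map_cat perm_map //.
  have := @perm3 _ (enum 'I_n) (fun j => y j <= c) (fun _ => false) (fun j => c < y j).
  rewrite filter_pred0 /=; apply => j; by rewrite ltNge; case: (y j <= c).
Qed.

Lemma size_sorted_vec (x : 'I_n -> R) : size (sorted_vec x) = n.
Proof. by rewrite /sorted_vec size_sort size_map size_enum_ord. Qed.

Lemma dom_lemma (x y : 'I_n -> R) i c : x i = c -> c < y i ->
  (forall j, j != i -> x j <= c -> y j = x j) ->
  (forall j, j != i -> c < x j -> c < y j) -> leximin_dom y x.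
Proof.
move=> xi yi H1 H2.
have Ex := sorted_split x i c xi.
have Ey := sorted_split2 y c.
have EL : [seq y j | j <- enum 'I_n & y j <= c] =
          [seq x j | j <- enum 'I_n & (j != i) && (x j <= c)].
  have -> : [seq j <- enum 'I_n | y j <= c] = [seq j <- enum 'I_n | (j != i) && (x j <= c)].
    apply: eq_filter => j; case: (eqVneq j i) => [->|ne] /=; first by rewrite leNgt yi.
    case: (leP (x j) c) => h; first by rewrite H1.
    by apply/negbTE; rewrite -ltNge; apply: H2.
  by apply/eq_in_map => j; rewrite mem_filter => /andP[/andP[ne h] _]; rewrite H1.
rewrite EL in Ey.
set L := sort _ [seq x j | j <- enum 'I_n & (j != i) && (x j <= c)] in Ex Ey.
set Gx := sort _ [seq x j | j <- enum 'I_n & c < x j] in Ex.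
set Gy := sort _ [seq y j | j <- enum 'I_n & c < y j] in Ey.
exists (size L); split.
  by have := size_sorted_vec x; rewrite Ex size_cat /= => <-; rewrite addnS ltnS leq_addr.
split.
  by move=> j hj; rewrite Ex Ey !nth_cat hj.
rewrite Ex Ey !nth_cat ltnn subnn /=.
have : y i \in Gy by rewrite mem_sort; apply: map_f; rewrite mem_filter yi mem_enum.
move=> hy; have hs : (0 < size Gy)%N by case: (Gy) hy.
have := mem_nth 0 hs; rewrite mem_sort => /mapP[j]; rewrite mem_filter => /andP[h _] ->.
exact: h.
Qed.


Lemma sv_sorted (x : 'I_n -> R) : sorted <=%R (sorted_vec x).
Proof. by apply: sort_sorted => ? ?; apply: le_total. Qed.

Lemma sv_mono (x : 'I_n -> R) m1 m2 : (m1 <= m2)%N -> (m2 < n)%N ->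
  nth 0 (sorted_vec x) m1 <= nth 0 (sorted_vec x) m2.
Proof.
move=> h12 h2; apply: (sorted_leq_nth le_trans lexx 0 (sv_sorted x)) => //;
  rewrite inE size_sorted_vec //; exact: (leq_ltn_trans h12).
Qed.

Lemma sv_mem (x : 'I_n -> R) j : exists m, (m < n)%N /\ nth 0 (sorted_vec x) m = x j.
Proof.
have hj : x j \in sorted_vec x by rewrite mem_sort; apply: map_f; rewrite mem_enum.
exists (index (x j) (sorted_vec x)); split; last exact: nth_index.
by have := index_mem (x j) (sorted_vec x); rewrite hj size_sorted_vec.
Qed.

Lemma sv_sum (x : 'I_n -> R) : \sum_(m < n) nth 0 (sorted_vec x) m = \sum_j x j.
Proof.
have := @big_nth R 0 +%R R 0 (sorted_vec x) xpredT (fun y : R => y).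
rewrite size_sorted_vec big_mkord => <-.
rewrite /sorted_vec -(perm_big _ (PS _)) big_map big_enum //=.
Qed.

End Sorting.



Section Gen.
Variable R : realFieldType.

Lemma bigmin_ex (T : finType) (P : pred T) (f : T -> R) :
  (forall t, P t -> 0 < f t) -> exists d, 0 < d /\ forall t, P t -> d <= f t.
Proof.
move=> H; exists (\big[Num.min/1]_(t | P t) f t); split.
  by apply: (big_ind (fun y => 0 < y)) => //= a b ha hb; rewrite lt_min ha hb.
by move=> t Pt; rewrite (bigD1 t) //= ge_min lexx.
Qed.

Variable n : nat.

Lemma sum_sub (A B : {set 'I_n}) (f : 'I_n -> R) : A \subset B ->
  (forall j, 0 <= f j) -> \sum_(j in A) f j <= \sum_(j in B) f j.
Proof.
move=> /subsetP AB f0; rewrite [X in X <= _]big_mkcond [X in _ <= X]big_mkcond.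
apply: ler_sum => j _; case: ifP => jA; first by rewrite (AB _ jA).
by case: ifP.
Qed.

Lemma sum_pred1 (A : {set 'I_n}) i (d : R) :
  \sum_(j in A) (if j == i then d else 0) = if i \in A then d else 0.
Proof.
case: ifP => iA.
  by rewrite (bigD1 i) //= eqxx big1 ?addr0 // => j /andP[_ /negbTE ->].
by rewrite big1 // => j jA; case: eqP => // ej; rewrite -ej jA in iA.
Qed.

Variable M : finType.
Variable v : 'I_n -> {set M} -> R.

Lemma wS_ge (S : {set 'I_n}) a : feasible a -> \sum_(i in S) v i (a i) <= wS v S.
Proof. by move=> fa; rewrite /wS (bigD1 a) //= le_max lexx. Qed.

Lemma wS_le (S : {set 'I_n}) x : 0 <= x ->
  (forall a, feasible a -> \sum_(i in S) v i (a i) <= x) -> wS v S <= x.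
Proof. move=> x0 H; rewrite /wS; apply: (big_ind (fun y => y <= x)) => // a b ha hb; by rewrite ge_max ha hb. Qed.

Lemma feasible0 : feasible [ffun _ : 'I_n => (set0 : {set M})].
Proof. by apply/forallP => i; apply/forallP => j; apply/implyP => _; rewrite !ffunE -setI_eq0 set0I. Qed.

Lemma wS_ge0 S : valuation_ok v -> 0 <= wS v S.
Proof.
move=> [v0 _]; apply: (le_trans _ (wS_ge S _ feasible0)).
by rewrite big1 // => j _; rewrite ffunE v0.
Qed.

Lemma wS_mono (A B : {set 'I_n}) : valuation_ok v -> A \subset B -> wS v A <= wS v B.
Proof.
move=> vok AB; apply: wS_le; first exact: wS_ge0.
move=> a fa; apply: (le_trans _ (wS_ge B _ fa)); apply: sum_sub => // j.
by case: vok => _ ->.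
Qed.

Lemma loser_zero a p j : valuation_ok v -> optimal_alloc v a -> a j = set0 ->
  in_core v p -> p j = 0.
Proof.
move=> vok [fa ea] aj [p0 pc]; apply/eqP; rewrite eq_le p0 andbT.
have := pc (~: [set j]); rewrite setCK big_set1 => h; apply: le_trans h _.
rewrite subr_le0 -ea; apply: (le_trans _ (wS_ge _ _ fa)).
rewrite (bigD1 j) //= aj (proj1 vok) add0r le_eqVlt; apply/orP; left; apply/eqP.
by apply: eq_bigl => k; rewrite !inE.
Qed.

Lemma core_le p i : in_core v p -> p i <= wS v [set: 'I_n] - wS v (~: [set i]).
Proof. by move=> [_ pc]; have := pc (~: [set i]); rewrite setCK big_set1. Qed.

Lemma core_max_gen i : valuation_ok v ->
  is_core_max v i (wS v [set: 'I_n] - wS v (~: [set i])).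
Proof.
move=> vok; split; last by move=> p; apply: core_le.
set d := _ - _.
have d0 : 0 <= d by rewrite subr_ge0 wS_mono // subsetT.
exists (fun j => if j == i then d else 0); split; last by rewrite eqxx.
split; first by move=> j; case: ifP.
move=> S; rewrite sum_pred1; case: ifP => iS.
  rewrite lerD2l lerN2 wS_mono //; apply/subsetP => j jS; rewrite !inE.
  by apply/eqP => eji; move: iS; rewrite inE -eji jS.
by rewrite subr_ge0 wS_mono // subsetT.
Qed.

End Gen.



Lemma tight_exists (R : realFieldType) n (M : finType) (v : 'I_n -> {set M} -> R)
  (p : 'I_n -> R) i : is_BLO v p ->
  exists S : {set 'I_n}, [/\ i \in ~: S,
     \sum_(j in ~: S) p j = wS v [set: 'I_n] - wS v S &
     forall j, j \in ~: S -> p j <= p i].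
Proof.
move=> [[p0 pc] nd]; set c := p i.
case: (boolP [exists S : {set 'I_n}, [&& i \in ~: S,
   \sum_(j in ~: S) p j == wS v [set: 'I_n] - wS v S &
   [forall j in ~: S, p j <= c]]]).
  move=> /existsP[S /and3P[iS /eqP e /forall_inP h]]; by exists S.
rewrite negb_exists => /forallP H; exfalso; apply: nd.
have [d1 [d1p d1l]] := @bigmin_ex R _
  (fun S : {set 'I_n} => (i \in ~: S) && (\sum_(j in ~: S) p j < wS v [set: 'I_n] - wS v S))
  (fun S => wS v [set: 'I_n] - wS v S - \sum_(j in ~: S) p j)
  ltac:(by move=> S /andP[_ h]; rewrite subr_gt0).
have [d2 [d2p d2l]] := @bigmin_ex R _ (fun j => c < p j) (fun j => p j - c)
  ltac:(by move=> j h; rewrite subr_gt0).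
set del := Num.min d1 d2 / 2.
have delp : 0 < del by rewrite divr_gt0 // lt_min d1p d2p.
have dle : forall x : R, 0 < x -> x / 2 < x.
  by move=> x x0; lra.
have del1 : del <= d1 by apply: ltW; apply: (lt_le_trans (dle _ _)); rewrite ?lt_min ?d1p ?d2p // ge_min lexx.
have del2 : del < d2 by apply: (lt_le_trans (dle _ _)); rewrite ?lt_min ?d1p ?d2p // ge_min lexx orbT.
set y := fun j => if j == i then c + del else if c < p j then p j - del else p j.
exists y; split; last first.
  apply: (@dom_lemma _ _ p y i c) => //.
  - by rewrite /y eqxx ltrDl.
  - by move=> j /negbTE ji h; rewrite /y ji ltNge h.
  - move=> j /negbTE ji h; rewrite /y ji h; have := d2l j h; lra.
have c0 : 0 <= c := p0 i.
split.
  move=> j; rewrite /y; case: ifP => _; first by rewrite addr_ge0 // ltW.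
  case: ifP => // h; have := d2l j h; lra.
move=> S.
have yle : forall j, y j <= p j + (if j == i then del else 0).
  move=> j; rewrite /y; case: ifP => [/eqP ->|_]; first by rewrite /c lexx.
  rewrite addr0; case: ifP => // _; lra.
have HS := pc S.
case iS: (i \in ~: S); last first.
  apply: le_trans HS; apply: (le_trans (ler_sum _ (fun j _ => yle j))).
  by rewrite big_split /= sum_pred1 iS addr0.
case: (ltP (\sum_(j in ~: S) p j) (wS v [set: 'I_n] - wS v S)) => hS.
  apply: (le_trans (ler_sum _ (fun j _ => yle j))).
  rewrite big_split /= sum_pred1 iS -lerBrDl.
  by apply: (le_trans del1); apply: d1l; rewrite iS hS.
have eS : \sum_(j in ~: S) p j = wS v [set: 'I_n] - wS v S by apply/eqP; rewrite eq_le HS hS.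
have := H S; rewrite iS eS eqxx /= => /forall_inPn [j0 j0S hj0].
rewrite -ltNge in hj0.
have j0i : j0 != i by apply/eqP => e; move: hj0; rewrite e ltxx.
have yle2 : forall j, y j <= p j + (if j == i then del else 0) - (if j == j0 then del else 0).
  move=> j; rewrite /y; case: (eqVneq j i) => [->|ji].
    rewrite eq_sym (negbTE j0i) subr0; exact: lexx.
  rewrite addr0; case: (eqVneq j j0) => [->|jj0]; first by rewrite hj0 lexx.
  by rewrite subr0; case: ifP => // _; lra.
apply: (le_trans (ler_sum _ (fun j _ => yle2 j))).
by rewrite sumrB big_split /= !sum_pred1 iS j0S addrK.
Qed.

Lemma part1 (R : realFieldType) (n : nat) (M : finType) (v : 'I_n -> {set M} -> R)
  (astar : {ffun 'I_n -> {set M}}) :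
  valuation_ok v -> optimal_alloc v astar -> winners astar != set0 ->
  forall (pBLO : 'I_n -> R), is_BLO v pBLO ->
  forall (i : 'I_n) (pistar : R), is_core_max v i pistar ->
    pistar / (#|winners astar|)%:R <= pBLO i.
Proof.
move=> vok opt W0 p blo i ps [[q [qc qi]] _].
have [S [iS eS hS]] := @tight_exists R n M v p i blo.
have pc := blo.1.
have h1 : ps <= wS v [set: 'I_n] - wS v (~: [set i]) by rewrite -qi; apply: core_le.
have h2 : wS v S <= wS v (~: [set i]).
  apply: wS_mono => //; apply/subsetP => j jS; rewrite !inE.
  by apply/eqP => e; move: iS; rewrite inE -e jS.
have h3 : ps <= \sum_(j in ~: S) p j by rewrite eS; apply: (le_trans h1); rewrite lerD2l lerN2.
have Wpos : (0 < #|winners astar|)%N by rewrite card_gt0.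
rewrite ler_pdivrMr ?ltr0n //; apply: (le_trans h3).
have -> : p i * (#|winners astar|)%:R = \sum_(j in winners astar) p i by rewrite sumr_const mulr_natr.
rewrite [X in X <= _]big_mkcond [X in _ <= X]big_mkcond; apply: ler_sum => j _.
case: ifP => jS; case: ifP => jW //.
- exact: hS.
- rewrite (@loser_zero R n M v astar p j vok opt _ pc) //; apply/eqP; move: jW; by rewrite inE => /negbFE.
- exact: (pc.1 i).
Qed.



Section Ex.
Variable R : realFieldType.
Variable k : nat.

Definition exv (j : 'I_k.+2) (A : {set 'I_k.+1}) : R :=
  if j == ord0 then (if A == setT then k%:R else 0)
  else (if inord j.-1 \in A then 1 else 0).
Definition exa : {ffun 'I_k.+2 -> {set 'I_k.+1}} :=
  [ffun j => if j == ord0 then set0 else [set inord j.-1]].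
Definition exaL : {ffun 'I_k.+2 -> {set 'I_k.+1}} :=
  [ffun j => if j == ord0 then setT else set0].
Definition exp (j : 'I_k.+2) : R := if j == ord0 then 0 else 1 / k.+1%:R.

Lemma liftne (j : 'I_k.+1) : (lift ord0 j == ord0 :> 'I_k.+2) = false.
Proof. by apply/negbTE; rewrite eq_sym neq_lift. Qed.

Lemma setT_neq0 : (set0 : {set 'I_k.+1}) != setT.
Proof. by apply/negP => /eqP e; have := in_setT (ord0 : 'I_k.+1); rewrite -e inE. Qed.

Lemma ex_vok : valuation_ok exv.
Proof.
split.
  by move=> j; rewrite /exv (negbTE setT_neq0) inE; case: ifP.
by move=> j A; rewrite /exv; case: ifP => _; case: ifP => _ //; rewrite ler0n.
Qed.

Lemma disj0 (A : {set 'I_k.+1}) : [disjoint set0 & A] /\ [disjoint A & set0].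
Proof. by rewrite -!setI_eq0 set0I setI0. Qed.

Lemma ex_feas : feasible exa.
Proof.
apply/forallP => i; apply/forallP => j; apply/implyP => ij; rewrite !ffunE.
case: (eqVneq i ord0) => [_|i0]; first exact: (disj0 _).1.
case: (eqVneq j ord0) => [_|j0]; first exact: (disj0 _).2.
rewrite disjoints1 inE; apply/eqP => e.
have := congr1 (@nat_of_ord _) e; rewrite !inordK; last 2 first.
- by have := ltn_ord j; lia.
- by have := ltn_ord i; lia.
move=> e2; move: ij; have : val i = val j.
  move: i0 j0; rewrite -!val_eqE /= => i0 j0; lia.
by move/val_inj => ->; rewrite eqxx.
Qed.

Lemma ex_feasL : feasible exaL.
Proof.
apply/forallP => i; apply/forallP => j; apply/implyP => ij; rewrite !ffunE.
case: (eqVneq i ord0) => [ei|i0]; last exact: (disj0 _).1.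
case: (eqVneq j ord0) => [ej|j0]; last exact: (disj0 _).2.
by move: ij; rewrite ei ej eqxx.
Qed.

Lemma ex_ub0 a (A : {set 'I_k.+2}) : feasible a ->
  \sum_(j in A) exv j (a j) <=
  (if a ord0 == setT then k%:R else \sum_(j in A) (j != ord0)%:R).
Proof.
move=> fa; case: ifP => h.
  apply: (le_trans (y := \sum_(j in A) (if j == ord0 then k%:R else 0))).
    apply: ler_sum => j _; rewrite /exv; case: ifP => j0.
      by case: ifP => _; rewrite ?ler0n.
    have : [disjoint a ord0 & a j].
      have := fa; rewrite /feasible => /forallP/(_ ord0)/forallP/(_ j)/implyP; apply.
      by rewrite eq_sym j0.
    rewrite (eqP h) -setI_eq0 setTI => /eqP ->; by rewrite inE.
  by rewrite sum_pred1; case: ifP => //; rewrite ler0n.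
apply: ler_sum => j _; rewrite /exv; case: ifP => j0 /=; first by rewrite (eqP j0) h.
by case: ifP.
Qed.

Lemma cnt (A : {set 'I_k.+2}) : \sum_(j in A) (j != ord0)%:R =
   (#|A|%:R - (if ord0 \in A then 1 else 0) : R).
Proof.
rewrite -sum_pred1 -[#|A|%:R]mulr1n -sumr_const -sumrB; apply: eq_bigr => j _.
by case: ifP => _; rewrite ?subr0 ?subrr.
Qed.

Lemma ex_ub_all a (A : {set 'I_k.+2}) : feasible a ->
  \sum_(j in A) exv j (a j) <= k.+1%:R.
Proof.
move=> fa; apply: (le_trans (ex_ub0 a A fa)); case: ifP => _; first by rewrite ler_nat.
apply: (le_trans (y := \sum_(j in [set: 'I_k.+2]) (j != ord0)%:R)).
  by apply: sum_sub => [|j]; rewrite ?subsetT ?ler0n.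
by rewrite cnt cardsT card_ord inE -natr1 addrK.
Qed.

Lemma ex_ub_miss a (A : {set 'I_k.+2}) j0 : feasible a -> j0 != ord0 -> j0 \notin A ->
  \sum_(j in A) exv j (a j) <= k%:R.
Proof.
move=> fa j00 j0A; apply: (le_trans (ex_ub0 a A fa)); case: ifP => _ //.
apply: (le_trans (y := \sum_(j in ~: [set j0]) (j != ord0)%:R)).
  apply: sum_sub => [|j]; rewrite ?ler0n //.
  by apply/subsetP => j jA; rewrite !inE; apply/eqP => e; move: j0A; rewrite -e jA.
rewrite cnt cardsC1 card_ord !inE eq_sym j00 /=.
by rewrite -natr1 addrK.
Qed.

Lemma ex_sum_opt : \sum_(j < k.+2) exv j (exa j) = k.+1%:R.
Proof.
rewrite big_ord_recl /exv ffunE eqxx (negbTE setT_neq0) add0r.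
rewrite (eq_bigr (fun _ => 1)); first by rewrite sumr_const card_ord.
by move=> j _; rewrite ffunE liftne set11.
Qed.

Lemma ex_wN : wS exv [set: 'I_k.+2] = k.+1%:R.
Proof.
apply/eqP; rewrite eq_le; apply/andP; split.
  by apply: wS_le => [|a fa]; [rewrite ler0n | exact: ex_ub_all].
rewrite -ex_sum_opt; apply: (le_trans _ (@wS_ge _ _ _ exv _ _ ex_feas)).
by rewrite le_eqVlt; apply/orP; left; apply/eqP; apply: eq_bigl => j; rewrite inE.
Qed.

Lemma ex_opt : optimal_alloc exv exa.
Proof. by split; [exact: ex_feas | rewrite ex_wN ex_sum_opt]. Qed.

Lemma ex_wL (A : {set 'I_k.+2}) : ord0 \in A -> k%:R <= wS exv A.
Proof.
move=> A0; apply: (le_trans _ (@wS_ge _ _ _ exv _ _ ex_feasL)).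
rewrite (bigD1 ord0) //= ffunE /exv !eqxx -[X in X <= _]addr0 lerD2l.
apply: sumr_ge0 => j _; exact: (ex_vok.2).
Qed.

Definition i1 : 'I_k.+2 := lift ord0 ord0.

Lemma i1_neq0 : i1 != ord0.
Proof. by rewrite /i1 liftne. Qed.

Lemma ex_wi : wS exv (~: [set i1]) = k%:R.
Proof.
apply/eqP; rewrite eq_le; apply/andP; split.
  apply: wS_le => [|a fa]; first by rewrite ler0n.
  by apply: (ex_ub_miss _ _ _ fa i1_neq0); rewrite !inE eqxx.
by apply: ex_wL; rewrite !inE eq_sym i1_neq0.
Qed.

Lemma ex_pistar : is_core_max exv i1 1.
Proof.
have := @core_max_gen R _ _ exv i1 ex_vok; rewrite ex_wN ex_wi.
have -> // : k.+1%:R - k%:R = 1 :> R by rewrite -natr1; lra.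
Qed.

Lemma ex_winners : #|winners exa| = k.+1.
Proof.
have -> : winners exa = ~: [set ord0].
  apply/setP => j; rewrite !inE ffunE; case: ifP => _; first by rewrite eqxx.
  by rewrite /=; apply/set0Pn; exists (inord j.-1); rewrite inE.
by rewrite cardsC1 card_ord.
Qed.

Lemma ex_sum_p : \sum_j exp j = 1.
Proof.
rewrite big_ord_recl /exp eqxx add0r.
rewrite (eq_bigr (fun _ => 1 / k.+1%:R)); last first.
  by move=> j _.
by rewrite sumr_const card_ord -[X in X = _]mulr_natr div1r mulVf // pnatr_eq0.
Qed.

Lemma exp_ge0 j : 0 <= exp j.
Proof. by rewrite /exp; case: ifP => // _; rewrite divr_ge0 ?ler0n. Qed.

Lemma ex_core : in_core exv exp.
Proof.
split; first exact: exp_ge0.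
move=> S; case: (boolP [exists j0, (j0 \in ~: S) && (j0 != ord0)]).
  move=> /existsP[j0 /andP[j0S j00]].
  have hS : wS exv S <= k%:R.
    apply: wS_le => [|a fa]; first by rewrite ler0n.
    by apply: (ex_ub_miss _ _ _ fa j00); rewrite inE in j0S.
  have hs : \sum_(j in ~: S) exp j <= 1.
    rewrite -ex_sum_p; apply: (le_trans (@sum_sub R _ _ _ exp (subsetT _) exp_ge0)).
    by rewrite le_eqVlt; apply/orP; left; apply/eqP; apply: eq_bigl => j; rewrite inE.
  rewrite ex_wN -natr1; lra.
rewrite negb_exists => /forallP H.
rewrite big1; last first.
  move=> j jS; have := H j; rewrite jS /= negbK /exp => ->; by [].
by rewrite subr_ge0 wS_mono // ?subsetT //; exact: ex_vok.
Qed.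

Lemma map_cst (T : Type) (s : seq T) (x : R) : map (fun _ => x) s = nseq (size s) x.
Proof. by elim: s => //= a s ->. Qed.

Lemma sorted_nseqR (m : nat) (x : R) : sorted <=%R (nseq m x).
Proof. by elim: m => //= -[|m] //= IH; rewrite lexx. Qed.

Lemma sv_exp : sorted_vec exp = 0 :: nseq k.+1 (1 / k.+1%:R).
Proof.
rewrite /sorted_vec enum_ordSl /= {1}/exp eqxx -map_comp.
rewrite (eq_map (g := fun _ => 1 / k.+1%:R)); last first.
  by move=> j /=; rewrite /exp liftne.
rewrite map_cst size_enum_ord sort_le_id //= divr_ge0 ?ler0n //=.
exact: (sorted_nseqR k.+1 _).
Qed.

Lemma nth_sp m : (m < k.+2)%N ->
  nth 0 (sorted_vec exp) m = if m == 0%N then 0 else 1 / k.+1%:R.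
Proof. rewrite sv_exp; case: m => //= m h. by rewrite (_ : _ :: _ = nseq k.+1 (1 / k.+1%:R)) // nth_nseq -ltnS h. Qed.

Lemma ex_BLO : is_BLO exv exp.
Proof.
split; first exact: ex_core.
move=> [q [qc [t [tlt [teq tgt]]]]].
have q0 : q ord0 = 0.
  apply: (@loser_zero R _ _ exv exa q ord0 ex_vok ex_opt) => //; by rewrite ffunE eqxx.
have qsum : \sum_j q j <= 1.
  have h := qc.2 [set ord0].
  have hL : k%:R <= wS exv [set ord0] by apply: ex_wL; rewrite inE.
  rewrite ex_wN in h.
  rewrite (bigD1 ord0) //= q0 add0r.
  have -> : \sum_(j | j != ord0) q j = \sum_(j in ~: [set ord0]) q j.
    by apply: eq_bigl => j; rewrite !inE.
  move: h hL; rewrite -natr1; lra.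
have [m0 [m0lt m0e]] := @sv_mem R _ q ord0.
have sq0 : forall m, (m < k.+2)%N -> 0 <= nth 0 (sorted_vec q) m.
  move=> m mlt.
  have [j' je'] : exists j' : 'I_k.+2, nth 0 (sorted_vec q) 0 = q j'.
    have hin : nth 0 (sorted_vec q) 0 \in sorted_vec q.
      by apply: mem_nth; rewrite size_sorted_vec.
    move: hin; rewrite mem_sort => /mapP[j'' _ ->]; by exists j''.
  apply: (le_trans _ (@sv_mono R _ q _ _ (leq0n m) mlt)); rewrite je'; exact: qc.1.
case: (posnP t) => [t0|tpos].
  move: tgt; rewrite t0 nth_sp // /= => h.
  have := @sv_mono R _ q _ _ (leq0n m0) m0lt; rewrite m0e q0; lra.
have : \sum_(m < k.+2) nth 0 (sorted_vec exp) m < \sum_(m < k.+2) nth 0 (sorted_vec q) m.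
  rewrite (bigD1 (Ordinal tlt)) //= [X in _ < X](bigD1 (Ordinal tlt)) //=.
  apply: ltr_leD => //; apply: ler_sum => m /= mt.
  case: (ltnP m t) => hm; first by rewrite teq.
  rewrite nth_sp // (negbTE (_ : m != 0%N :> nat)); last first.
    by apply/eqP => e; move: hm tpos; rewrite e; lia.
  have := @sv_mono R _ q _ _ hm (ltn_ord m).
  move: tgt; rewrite nth_sp // (negbTE (_ : t != 0%N :> nat)) ?lt0n_neq0 //; move=> h1 h2; exact: ltW (lt_le_trans h1 h2).
rewrite !sv_sum ex_sum_p; lra.
Qed.

End Ex.


Theorem theorem2 (R : realType) :
  (forall (n : nat) (M : finType) (v : 'I_n -> {set M} -> R)
          (astar : {ffun 'I_n -> {set M}}),
     valuation_ok v -> optimal_alloc v astar ->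
     winners astar != set0 ->
     forall (pBLO : 'I_n -> R), is_BLO v pBLO ->
     forall (i : 'I_n) (pistar : R), is_core_max v i pistar ->
       pistar / (#|winners astar|)%:R <= pBLO i)
  /\
  (forall k : nat, (1 <= k)%N ->
     exists (n m : nat) (v : 'I_n -> {set 'I_m} -> R)
            (astar : {ffun 'I_n -> {set 'I_m}}),
       valuation_ok v /\ optimal_alloc v astar /\
       #|winners astar| = k /\
       exists (i : 'I_n) (pistar : R) (pBLO : 'I_n -> R),
         is_core_max v i pistar /\ 0 < pistar /\
         is_BLO v pBLO /\ pBLO i = pistar / k%:R).
Proof.
split.
  move=> n M v astar vok opt W p blo i ps hps; exact: (@part1 R n M v astar vok opt W p blo i ps hps).
case=> [|k] // _.
exists k.+2, k.+1, (exv R k), (exa k).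
split; first exact: ex_vok.
split; first exact: ex_opt.
split; first exact: ex_winners.
exists (i1 k), 1, (exp R k).
split; first exact: ex_pistar.
split; first exact: ltr01.
split; first exact: ex_BLO.
by rewrite /exp /i1 liftne.
Qed.
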